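(* Let $d\ge 3$ be an integer and let $(x,y)$ be an integer solution of \[ d(2x+d+1)\left(x^2+(d+1)x+\frac{d(d+1)}{2}\right)=2y^3 . \] Then there are integers $y_1,y_2$ and a pair $(\alpha,\beta)\in\mathcal{A}_d^{(3)}$ such that \[ 2x+d+1=\alpha y_1^3,\qquad x^2+(d+1)x+\frac{d(d+1)}{2}=\beta y_2^3 . \]
   Context: For an integer $m$, $[m]\in\{0,1,2\}$ denotes the residue with $m\equiv[m]\pmod 3$. For a prime $q$ let $\mu_q=\operatorname{ord}_q(d^2-1)$ and $\nu_q=\operatorname{ord}_q(d)$. To each prime $q$ associate a set $T_q\subseteq\{0,1,2\}^2$: if $q\nmid d(d^2-1)$, $T_q=\{(0,0)\}$. For $q=2$: $T_2=\{(0,[1-\nu_2])\}$ if $2\mid d$; $T_2=\{(1,0),(0,1),(2,2)\}$ if $2\nmid d$ and $\mu_2\ge 4$; $T_2=\{(1,0),(0,1)\}$ if $2\nmid d$ and $\mu_2=3$. For odd $q\mid d$: $T_q=\{([-\nu_q],0),(0,[-\nu_q])\}$. For odd $q\mid d^2-1$: $T_q=\{(0,0),(1,2),(2,1)\}$ if $\mu_q\ge 2$, and $T_q=\{(0,0),(2,1)\}$ if $\mu_q=1$. Then $\mathcal{A}_d^{(3)}$ is the set of pairs of positive integers $(\alpha,\beta)$ with $(\operatorname{ord}_q(\alpha),\operatorname{ord}_q(\beta))\in T_q$ for every prime $q$. *)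

(* Defs.v *)
From mathcomp Require Import all_boot all_order all_algebra.
Set Implicit Arguments. Unset Strict Implicit. Unset Printing Implicit Defensive.
Import Order.TTheory GRing.Theory Num.Theory.

Definition res3 (m : int) : nat := absz (m %% 3)%Z.

(* mu_q = ord_q(d^2 - 1), nu_q = ord_q(d)  (d >= 3, so d^2-1 > 0) *)
Definition mu (d q : nat) : nat := logn q (d ^ 2 - 1).
Definition nu (d q : nat) : nat := logn q d.

Definition Tq (d q : nat) : seq (nat * nat) :=
  if ~~ (q %| d * (d ^ 2 - 1)) then [:: (0, 0)]
  else if q == 2 then
    (if 2 %| d then [:: (0, res3 (1 - (nu d 2)%:Z))]
     else if 4 <= mu d 2 then [:: (1, 0); (0, 1); (2, 2)]
     else if mu d 2 == 3 then [:: (1, 0); (0, 1)]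
     else [::] (* impossible: d odd forces 8 | d^2-1 *))
  else if q %| d then [:: (res3 (- (nu d q)%:Z), 0); (0, res3 (- (nu d q)%:Z))]
  else (* odd q dividing d^2-1 *)
    if 2 <= mu d q then [:: (0, 0); (1, 2); (2, 1)]
    else [:: (0, 0); (2, 1)].

Definition in_A3 (d alpha beta : nat) : Prop :=
  0 < alpha /\ 0 < beta /\
  forall q : nat, prime q -> (logn q alpha, logn q beta) \in Tq d q.

(* Main.v *)
Require Import Defs.
From mathcomp Require Import all_boot all_order all_algebra.
From mathcomp Require Import zify ring.
From Stdlib Require Import Classical.
Lemma res3_1m n : res3 (1 - n%:Z) = (1 + 2*n) %% 3.
Proof. rewrite /res3. lia. Qed.
Lemma res3_m n : res3 (- n%:Z) = (2*n) %% 3.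
Proof. rewrite /res3. lia. Qed.

Lemma logn_ndvd q n : ~~ (q %| n) -> logn q n = 0.
Proof.
move=> H; apply/eqP; rewrite -leqn0 leqNgt logn_gt0 mem_primes.
by apply/negP => /and3P [_ _ /(negP H)].
Qed.

Arguments logn_ndvd {q n}.
Lemma even_d3 d : 2 %| d * (d ^ 2 - 1).
Proof.
rewrite dvdn2 oddM; case Hd: (odd d) => //=.
have h : 1 <= d ^ 2 by rewrite expn_gt0; case: d Hd.
by rewrite oddB // oddX Hd.
Qed.

Lemma mu2_ge3 d : 3 <= d -> ~~ (2 %| d) -> 3 <= mu d 2.
Proof.
move=> Hd3; rewrite dvdn2 negbK => Hodd.
rewrite /mu -pfactor_dvdn //; last by rewrite subn_gt0; nia.
move: (odd_double_half d); rewrite Hodd => Hd.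
set k := d./2 in Hd.
have Hk : ~~ odd (k * k.+1) by rewrite oddM /= ; case: (odd k).
move: Hk; rewrite -dvdn2 => /dvdnP [m Hm].
apply/dvdnP; exists m.
rewrite -Hd.
have -> : (1 + k.*2) ^ 2 - 1 = 4 * (k * k.+1) by rewrite -!mul2n; lia.
rewrite Hm; lia.
Qed.

Lemma pairs1 r s : r < 3 -> s < 3 -> (r + s) %% 3 = 1 -> (r, s) \in [:: (1,0); (0,1); (2,2)].
Proof. by case: r => [|[|[|r]]] //; case: s => [|[|[|s]]]. Qed.
Lemma pairs1' r s : r < 3 -> s < 3 -> (r + s) %% 3 = 1 -> s != 2 -> (r, s) \in [:: (1,0); (0,1)].
Proof. by case: r => [|[|[|r]]] //; case: s => [|[|[|s]]]. Qed.
Lemma pairs0 r s : r < 3 -> s < 3 -> (r + s) %% 3 = 0 -> (r, s) \in [:: (0,0); (1,2); (2,1)].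
Proof. by case: r => [|[|[|r]]] //; case: s => [|[|[|s]]]. Qed.
Lemma pairs0' r s : r < 3 -> s < 3 -> (r + s) %% 3 = 0 -> s != 2 -> (r, s) \in [:: (0,0); (2,1)].
Proof. by case: r => [|[|[|r]]] //; case: s => [|[|[|s]]]. Qed.
Lemma pairs00 r s : r < 3 -> s < 3 -> (r + s) %% 3 = 0 -> r = 0 \/ s = 0 -> (r, s) \in [:: (0,0)].
Proof. by case: r => [|[|[|r]]] //; case: s => [|[|[|s]]] // _ _ _ []. Qed.

Lemma core d q r s : 3 <= d -> prime q -> r < 3 -> s < 3 ->
  (logn q d + r + s) %% 3 = (q == 2) %% 3 ->
  (~~ (q %| d * (d ^ 2 - 1)) -> r = 0 \/ s = 0) ->
  (q = 2 -> 2 %| d -> r = 0) ->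
  (q %| d -> r = 0 \/ s = 0) ->
  (q = 2 -> ~~ (2 %| d) -> mu d 2 < 4 -> s != 2) ->
  (q != 2 -> ~~ (q %| d) -> q %| d ^ 2 - 1 -> mu d q < 2 -> s != 2) ->
  (r, s) \in Tq d q.
Proof.
move=> Hd3 Hq Hr Hs Hsum H1 H2 H4 H3 H5.
rewrite /Tq /nu.
case: ifP => Hdiv.
  have Hq2 : (q == 2) = false.
    by apply/negP => /eqP Eq; move: Hdiv; rewrite Eq even_d3.
  have Hqd : ~~ (q %| d) by apply/negP => Hq'; move: Hdiv; rewrite (dvdn_mulr _ Hq').
  move: Hsum; rewrite Hq2 (logn_ndvd Hqd) add0n => Hsum.
  exact: pairs00 Hr Hs Hsum (H1 Hdiv).
case: eqP => Hq2.
  subst q; move: Hsum; rewrite eqxx => Hsum; case: ifP => H2d.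
    have Hr0 := H2 erefl H2d; rewrite Hr0 res3_1m inE.
    move: Hsum; rewrite Hr0 addn0 => Hsum.
    apply/eqP; congr (_, _); clear -Hsum Hs; lia.
  have Hm := mu2_ge3 _ Hd3 (negbT H2d).
  move: Hsum; rewrite (logn_ndvd (negbT H2d)) add0n => Hsum.
  case: ifP => H4m.
    exact: pairs1 Hr Hs Hsum.
  have -> : mu d 2 == 3 by apply/eqP; move/negbT: H4m; rewrite -ltnNge; clear -Hm; lia.
  have := H3 erefl (negbT H2d); rewrite ltnNge H4m => /(_ isT).
  exact: pairs1' Hr Hs Hsum.
move: Hsum; rewrite (introF eqP Hq2) => Hsum.
case: ifP => Hqd.
  rewrite res3_m !inE.
  have [E|E] := H4 Hqd; rewrite E; move: Hsum; rewrite E => Hsum.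
    apply/orP; right; apply/eqP; congr (_,_); clear -Hsum Hs; lia.
  apply/orP; left; apply/eqP; congr (_,_); clear -Hsum Hr; lia.
move: Hsum; rewrite (logn_ndvd (negbT Hqd)) add0n => Hsum.
case: ifP => Hm.
  exact: pairs0 Hr Hs Hsum.
have HX : q %| d ^ 2 - 1.
  by move/negbT: Hdiv; rewrite negbK Euclid_dvdM // Hqd.
have := H5 (introN eqP Hq2) (negbT Hqd) HX; rewrite ltnNge Hm => /(_ isT).
exact: pairs0' Hr Hs Hsum.
Qed.

Lemma cube_dec n : 0 < n -> exists a c, [/\ 0 < a, 0 < c, n = a * c ^ 3 &
  forall p, prime p -> logn p a < 3].
Proof.
elim/ltn_ind: n => n IH Hn.
case: (classic (forall p, prime p -> logn p n < 3)) => H.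
  by exists n, 1; split => //; rewrite exp1n muln1.
have [p Hp] := not_all_ex_not _ _ H.
have [Hpr Hl] : prime p /\ 3 <= logn p n.
  by case: (prime p) Hp => //; case: ltnP => // Hl _; split.
have : p ^ 3 %| n by rewrite pfactor_dvdn.
move/dvdnP => [m Hm].
have Hp1 : 1 < p by apply: prime_gt1.
have Hm0 : 0 < m by move: Hn; rewrite Hm muln_gt0 => /andP [].
have Hmn : m < n.
  rewrite Hm -{1}(muln1 m) ltn_pmul2l //.
  by rewrite (leq_trans Hp1) // -{1}(expn1 p) leq_pexp2l // ltnW.
have [a [c [Ha Hc Hmac Hlog]]] := IH m Hmn Hm0.
exists a, (c * p); split => //.
  by rewrite muln_gt0 Hc (ltnW Hp1).
by rewrite Hm Hmac expnMn mulnA.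
Qed.

Lemma logn_cube p n a c : 0 < a -> 0 < c -> n = a * c ^ 3 -> logn p a < 3 ->
  logn p a = logn p n %% 3.
Proof.
move=> Ha Hc -> Hl; rewrite lognM ?expn_gt0 ?Hc // lognX; lia.
Qed.

Lemma two_pow_not_both q U V X : prime q -> 4 * V = U ^ 2 + X ->
  q %| U -> q %| V -> q %| X.
Proof.
move=> Hq E HU HV.
have : q %| U ^ 2 + X by rewrite -E dvdn_mull.
by rewrite dvdn_addr // dvdn_exp.
Qed.

Lemma logn_mod0 q n : ~~ (q %| n) -> logn q n %% 3 = 0.
Proof. by move/logn_ndvd => ->. Qed.

Lemma logn_lt2 q n : prime q -> 0 < n -> ~~ (q ^ 2 %| n) -> logn q n %% 3 != 2.
Proof. by move=> Hq Hn; rewrite pfactor_dvdn // -ltnNge => H; rewrite modn_small ?(ltn_trans H) //; case: logn H => [|[|]]. Qed.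

Lemma lA d : 3 <= d -> 8 <= d ^ 2 - 1.
Proof. move=> H. nia. Qed.
Lemma lB U V d : 4 * V = U ^ 2 + (d ^ 2 - 1) -> 0 < d -> ~~ odd U -> ~~ odd d -> False.
Proof.
move=> E Hd HU Hdd; have h : 1 <= d ^ 2 by rewrite expn_gt0 Hd.
have := congr1 odd E; rewrite oddD oddB // oddM /= !oddX.
by rewrite (negbTE HU) (negbTE Hdd).
Qed.
Lemma lD U w t : 4 * (w * 2 ^ 2) = U ^ 2 + t * 2 ^ 3 -> odd t -> False.
Proof.
move=> E Ht.
move: (odd_double_half U) (odd_double_half t) => HU Ht'.
rewrite Ht in Ht'.
case: (odd U) HU => /= HU.
  have := congr1 odd E; rewrite -HU oddD oddX oddD odd_double !oddM /=.
  by rewrite andbF.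
move: (odd_double_half U./2) => HU2.
set a := U./2 in HU HU2. set b := a./2 in HU2. set c := t./2 in Ht'.
rewrite -HU -Ht' -!muln2 in E.
case: (odd a) HU2 => /= HU2; rewrite -HU2 -muln2 in E; lia.
Qed.

Lemma local_pos d U V Y q : 3 <= d -> 0 < U -> 4 * V = U ^ 2 + (d ^ 2 - 1) ->
  d * U * V = 2 * Y ^ 3 -> prime q ->
  (logn q U %% 3, logn q V %% 3) \in Tq d q.
Proof.
move=> Hd HU E EY Hq.
set X := d ^ 2 - 1 in E.
have HX : 8 <= X by exact: lA.
have HV : 0 < V by clear -E HX; lia.
have HY : 0 < Y.
  have : 0 < 2 * Y ^ 3 by rewrite -EY !muln_gt0 HU HV andbT; clear -Hd; lia.
  by rewrite muln_gt0 expn_gt0 /= orbF.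
have Hsum : (logn q d + logn q U + logn q V) = (q == 2) + 3 * logn q Y.
  rewrite -!lognM ?muln_gt0 ?HU ?HV ?andbT //; try (clear -Hd; lia).
  rewrite EY lognM ?expn_gt0 ?HY // lognX logn_prime //.
have Hnb : ~~ ((q %| U) && (q %| V)) \/ q %| X.
  case: (boolP ((q %| U) && (q %| V))) => [/andP [a b]|]; [right|left] => //.
  exact: two_pow_not_both E a b.
apply: core => //; try exact: ltn_pmod.
- clear -Hsum; lia.
- move=> Hn; case: Hnb => [|HqX]; last by move: Hn; rewrite dvdn_mull.
  by rewrite negb_and => /orP [/logn_mod0 ->|/logn_mod0 ->]; auto.
- move=> Hq2 H2d; apply: logn_mod0; subst q; apply/negP => H2U.
  move/dvdnP: H2d => [e He]; move/dvdnP: H2U => [k Hk].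
  apply: (lB _ _ _ E); first by clear -Hd; lia.
    by rewrite Hk oddM andbF.
  by rewrite He oddM andbF.
- move=> Hqd; case: Hnb => [|HqX].
    by rewrite negb_and => /orP [/logn_mod0 ->|/logn_mod0 ->]; auto.
  exfalso.
  have : q %| d ^ 2 - X by rewrite dvdn_sub // dvdn_exp.
  have -> : d ^ 2 - X = 1 by rewrite /X subKn // expn_gt0; clear -Hd; lia.
  by rewrite dvdn1 => /eqP Hq1; move: Hq; rewrite Hq1.
- move=> Hq2 Hodd Hmu; subst q; apply: logn_lt2 => //; apply/negP => H4V.
  have H8 : 2 ^ 3 %| X by rewrite pfactor_dvdn //; [exact: mu2_ge3 | exact: (leq_trans _ HX)].
  have H16 : ~~ (2 ^ 4 %| X) by rewrite pfactor_dvdn // -?ltnNge //; exact: (leq_trans _ HX).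
  move/dvdnP: H8 => [t Ht]; move/dvdnP: H4V => [w Hw].
  have Ht2 : odd t.
    case Hte: (odd t) => //; move: H16; rewrite Ht.
    have := odd_double_half t; rewrite Hte add0n => <-.
    move/negP => H; exfalso; apply: H; apply/dvdnP; exists t./2; rewrite -mul2n !expnS expn0; lia.
  by move: E; rewrite Ht Hw => E; exact: (lD _ _ _ E Ht2).
- move=> Hq2 Hqd HqX Hmu; apply: logn_lt2 => //; apply/negP => Hq2V.
  have HqU : q %| U.
    have : q %| U ^ 2 + X by rewrite -E dvdn_mull // (dvdn_trans _ Hq2V) // dvdn_exp.
    by rewrite dvdn_addl // Euclid_dvdX // andbT.
  have : q ^ 2 %| U ^ 2 + X by rewrite -E dvdn_mull.
  rewrite dvdn_addr; last by rewrite dvdn_exp2r.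
  by rewrite pfactor_dvdn //; [ rewrite leqNgt Hmu | exact: (leq_trans _ HX)].
Qed.

Lemma local_zero d V q : 3 <= d -> 4 * V = d ^ 2 - 1 -> prime q ->
  (logn q (2 * d ^ 2 * V ^ 2) %% 3, logn q V %% 3) \in Tq d q.
Proof.
move=> Hd E Hq.
set X := d ^ 2 - 1 in E.
have HX : 8 <= X by exact: lA.
have HV : 0 < V by clear -E HX; lia.
have Hd0 : 0 < d by clear -Hd; lia.
have Hl : logn q (2 * d ^ 2 * V ^ 2) = (q == 2) + 2 * logn q d + 2 * logn q V.
  rewrite !lognM ?muln_gt0 ?expn_gt0 ?HV ?Hd0 // logn_prime //; clear; lia.
have HqV : q %| V -> q %| X by move=> H; rewrite -E dvdn_mull.
apply: core => //; try exact: ltn_pmod.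
- rewrite Hl; clear; lia.
- move=> Hn; right; apply: logn_mod0; apply/negP => /HqV H.
  by move: Hn; rewrite dvdn_mull.
- move=> Hq2 H2d; exfalso; subst q; move/dvdnP: H2d => [e He].
  apply: (lB 0 V d); rewrite ?expn0n ?add0n //.
  by rewrite He oddM andbF.
- move=> Hqd; right; apply: logn_mod0; apply/negP => /HqV HqX.
  have : q %| d ^ 2 - X by rewrite dvdn_sub // dvdn_exp.
  have -> : d ^ 2 - X = 1 by rewrite /X subKn // expn_gt0 Hd0.
  by rewrite dvdn1 => /eqP Hq1; move: Hq; rewrite Hq1.
- move=> Hq2 Hodd Hmu; subst q; apply: logn_lt2 => //; apply/negP => H4V.
  have : 2 ^ 4 %| X by rewrite -E (dvdn_trans _ (dvdn_mul (dvdnn 4) H4V)).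
  by rewrite pfactor_dvdn ?(leq_trans _ HX) // leqNgt Hmu.
- move=> Hq2 Hqd HqX Hmu; apply: logn_lt2 => //; apply/negP => Hq2V.
  have : q ^ 2 %| X by rewrite -E dvdn_mull.
  by rewrite pfactor_dvdn //; [ rewrite leqNgt Hmu | exact: (leq_trans _ HX)].
Qed.

Import Order.TTheory GRing.Theory Num.Theory.
Local Open Scope ring_scope.

Lemma PoszX (c k : nat) : ((c ^ k)%N)%:Z = (c%:Z) ^+ k.
Proof. by rewrite -!natz natrX. Qed.

Lemma E4_lem (d : nat) (x : int) : (3 <= d)%N ->
  4 * (x ^+ 2 + (d%:Z + 1) * x + ((d * (d + 1)) %/ 2)%N%:Z) =
  (2 * x + d%:Z + 1) ^+ 2 + ((d ^ 2 - 1)%N)%:Z.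
Proof.
move=> Hd.
have Hh : ((d * (d + 1)) %/ 2 * 2 = d * (d + 1))%N.
  by apply: divnK; rewrite dvdn2 oddM addn1 oddS andbN.
have Hh' : ((d * (d + 1)) %/ 2)%N%:Z * 2 = d%:Z * (d%:Z + 1).
  by rewrite -[2]/(2%N%:Z) -PoszM Hh PoszM.
have H1 : ((d ^ 2 - 1)%N)%:Z = d%:Z ^+ 2 - 1.
  by rewrite subzn ?PoszX // muln_gt0 andbb (leq_trans _ Hd).
rewrite H1.
set h := ((d * (d + 1)) %/ 2)%N%:Z in Hh' *.
have -> : 4 * (x ^+ 2 + (d%:Z + 1) * x + h) = 4 * x ^+ 2 + 4 * (d%:Z + 1) * x + 2 * (h * 2) by ring.
rewrite Hh'; ring.
Qed.

Theorem lemma8p1 (d : nat) (x y : int) :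
  (3 <= d)%N ->
  (d%:Z * (2 * x + d%:Z + 1) *
     (x ^+ 2 + (d%:Z + 1) * x + ((d * (d + 1)) %/ 2)%N%:Z) = 2 * y ^+ 3) ->
  exists (y1 y2 : int) (alpha beta : nat),
    in_A3 d alpha beta /\
    2 * x + d%:Z + 1 = alpha%:Z * y1 ^+ 3 /\
    x ^+ 2 + (d%:Z + 1) * x + ((d * (d + 1)) %/ 2)%N%:Z = beta%:Z * y2 ^+ 3.
Proof.
move=> Hd.
have E4 := E4_lem d x Hd.
set u := 2 * x + d%:Z + 1 in E4 *.
set v := x ^+ 2 + (d%:Z + 1) * x + ((d * (d + 1)) %/ 2)%N%:Z in E4 *.
move=> Hy.
set X := (d ^ 2 - 1)%N in E4.
have HX : (8 <= X)%N by exact: lA.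
have Hv0 : 0 <= v.
  have : 0 <= 4 * v by rewrite E4 addr_ge0 ?sqr_ge0.
  by rewrite pmulr_rge0.
have Ev : v = (`|v|%N)%:Z by rewrite gez0_abs.
have Eu2 : u ^+ 2 = ((`|u| ^ 2)%N)%:Z by rewrite -abszX gez0_abs ?sqr_ge0.
have EV : (4 * `|v| = `|u| ^ 2 + X)%N.
  by have := congr1 absz E4; rewrite Eu2 abszM.
have EY : (d * `|u| * `|v| = 2 * `|y| ^ 3)%N.
  have := congr1 absz Hy; rewrite !abszM /= => ->; by rewrite 3!expnS expn0 muln1.
have HVp : (0 < `|v|)%N by move: EV HX; clear; lia.
have [V [c2 [HV0 Hc2 EVc HlV]]] := cube_dec _ HVp.
have HlogV q : prime q -> logn q V = (logn q `|v| %% 3)%N.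
  by move=> Hq; apply: logn_cube HV0 Hc2 EVc (HlV q Hq).
have Ev3 : v = V%:Z * (c2%:Z) ^+ 3 by rewrite Ev EVc PoszM PoszX.
case: (posnP `|u|) => HU.
  have Hu0 : u = 0 by apply/eqP; rewrite -absz_eq0 HU.
  have EV0 : (4 * `|v| = d ^ 2 - 1)%N by rewrite EV HU.
  have Hd0 : (0 < d)%N by move: Hd; clear; lia.
  have HWp : (0 < 2 * d ^ 2 * `|v| ^ 2)%N.
    by rewrite !muln_gt0 ?expn_gt0 ?Hd0 ?HVp.
  have [A [c1 [HA0 Hc1 EAc HlA]]] := cube_dec _ HWp.
  exists 0, c2%:Z, A, V; split; last by rewrite Hu0 expr0n mulr0.
  split => //; split => // q Hq.
  rewrite HlogV // (logn_cube _ _ _ _ HA0 Hc1 EAc (HlA q Hq)).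
  exact: local_zero.
have [A [c1 [HA0 Hc1 EAc HlA]]] := cube_dec _ HU.
exists (if 0 <= u then c1%:Z else - c1%:Z), c2%:Z, A, V; split; last first.
  split => //.
  case: ifP => Hu.
    have -> : u = `|u|%N%:Z by rewrite gez0_abs.
    by rewrite EAc PoszM PoszX.
  have Hu' : u <= 0 by apply: ltW; rewrite ltNge Hu.
  have -> : u = - (`|u|%N%:Z) by rewrite lez0_abs ?opprK.
  rewrite EAc PoszM PoszX; ring.
split => //; split => // q Hq.
rewrite HlogV // (logn_cube _ _ _ _ HA0 Hc1 EAc (HlA q Hq)).
exact: (local_pos _ _ _ _ _ Hd HU EV EY Hq).
Qed.
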